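(* There exists an absolute constant $c>0$ such that the following holds. Let $G$ be an abelian group and let $A\subseteq G$ be a finite nonempty set with $|A|=n$ and $|A-A|=\kappa n$. Then for each integer $s\ge1$ there exists a subset $A_{(s)}\subseteq A$ with $|A_{(s)}|\le s$ such that \[ |A-A_{(s)}|\ge c\min(\kappa^{1/2},s)\,|A|. \]
   Context: For subsets $X,Y$ of an abelian group, $X-Y=\{x-y:x\in X,y\in Y\}$. *)

(* Defs.v *)
From Stdlib Require Import Reals.
From HB Require Import structures.
From mathcomp Require Import all_boot all_algebra.
From mathcomp Require Import finmap.
Set Implicit Arguments. Unset Strict Implicit. Unset Printing Implicit Defensive.
Import GRing.Theory.
Local Open Scope fset_scope.
Local Open Scope ring_scope.

Definition diffset (G : zmodType) (X Y : {fset G}) : {fset G} :=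
  [fset (x - y)%R | x in X, y in Y].

(* Main.v *)
Require Import Defs.
From Stdlib Require Import Reals.
From HB Require Import structures.
From mathcomp Require Import all_boot all_algebra.
From mathcomp Require Import finmap.
From Stdlib Require Import Lia Lra.
From mathcomp Require Import zify.
Local Open Scope fset_scope.
Set Implicit Arguments.
Section S.
Variable G : zmodType.
Implicit Types A B X : {fset G}.

Lemma diffsetP X Y z :
  reflect (exists x y, [/\ x \in X, y \in Y & z = (x - y)%R]) (z \in diffset X Y).
Proof.
apply: (iffP (imfset2P _ _ _ _ _)).
  by move=> [x xX [y yY ->]]; exists x, y.
by move=> [x [y [xX yY ->]]]; exists x => //; exists y.
Qed.

Lemma mem_diffset X Y x y : x \in X -> y \in Y -> (x - y)%R \in diffset X Y.
Proof. by move=> xX yY; apply/diffsetP; exists x, y. Qed.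

Lemma card_shift A (b : G) : #|` [fset (a - b)%R | a in A]| = #|` A|.
Proof. by rewrite card_imfset //= => x y /GRing.addIr. Qed.

Lemma card_negshift A (x : G) : #|` [fset (x - a)%R | a in A]| = #|` A|.
Proof. by rewrite card_imfset //= => u v /GRing.addrI /GRing.oppr_inj. Qed.

Lemma sum_const_fset (D : {fset G}) (k : nat) :
  (\sum_(d <- D) k = #|` D| * k)%N.
Proof. by rewrite card_fset_sum1 big_distrl /=; apply: eq_bigr => _ _; rewrite mul1n. Qed.

Lemma card_filter_sum (X : {fset G}) (P : pred G) :
  #|` [fset x in X | P x]| = (\sum_(x <- X) P x)%N.
Proof.
by rewrite card_fset_sum1 -big_fset_condE big_mkcond /=; apply: eq_bigr => i _; case: (P i).
Qed.

Lemma key A X :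
  (forall b, b \in A -> 2 * #|` A| <= 3 * #|` [fset a in A | (a - b)%R \in X]|)%N ->
  (#|` diffset A A| * #|` A| <= 3 * (#|` X| * #|` X|))%N.
Proof.
move=> H.
set n := #|` A|.
pose N d := #|` [fset x in X | (x - d)%R \in X]|.
have HN : forall d, d \in diffset A A -> (n <= 3 * N d)%N.
  move=> d /diffsetP [b1 [b2 [b1A b2A ->]]].
  set A1 := [fset a in A | (a - b1)%R \in X].
  set A2 := [fset a in A | (a - b2)%R \in X].
  have h1 := H _ b1A; have h2 := H _ b2A.
  have hU : (#|` A1 `|` A2| <= n)%N.
    apply: fsubset_leq_card; apply/fsubsetP => x.
    by rewrite in_fsetU !in_fset /= !inE => /orP [/andP [] | /andP []].
  have hUI := cardfsUI A1 A2.
  have hI : (#|` A1 `&` A2| <= N (b1 - b2)%R)%N.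
    rewrite -(card_shift (A1 `&` A2) b2).
    apply: fsubset_leq_card; apply/fsubsetP => x /imfsetP [a /= + ->].
    rewrite in_fsetI !in_fset /= !inE => /andP [/andP [aA a1] /andP [_ a2]].
    apply/andP; split; first exact: a2.
    by have -> : (a - b2 - (b1 - b2) = a - b1)%R by rewrite GRing.opprB GRing.addrA GRing.subrK.
  rewrite -/A1 -/A2 in h1 h2. lia.
have lower : (#|` diffset A A| * n <= 3 * \sum_(d <- diffset A A) N d)%N.
  rewrite -sum_const_fset big_distrr /= big_seq [X in (_ <= X)%N]big_seq.
  by apply: leq_sum => d dD; apply: HN.
have upper : (\sum_(d <- diffset A A) N d <= #|` X| * #|` X|)%N.
  rewrite /N.
  under eq_bigr => d _ do rewrite card_filter_sum.
  rewrite exchange_big /= -sum_const_fset big_seq [X in (_ <= X)%N]big_seq.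
  apply: leq_sum => x xX.
  rewrite -card_filter_sum.
  rewrite -(card_negshift _ x).
  apply: fsubset_leq_card; apply/fsubsetP => y /imfsetP [d /= + ->].
  by rewrite in_fset /= inE => /andP [].
apply: leq_trans lower _.
by rewrite leq_mul2l upper orbT.
Qed.


Lemma claim A (j : nat) :
  (j * j * #|` A| <= #|` diffset A A|)%N ->
  exists B, [/\ B `<=` A, (#|` B| <= j)%N & (j * #|` A| <= 3 * #|` diffset A B|)%N].
Proof.
elim: j => [|j IH] hj.
  by exists fset0; split => //; apply/fsubsetP => x; rewrite in_fset0.
have hj' : (j * j * #|` A| <= #|` diffset A A|)%N.
  apply: leq_trans hj; rewrite leq_mul2r; apply/orP; right; apply: leq_mul; exact: leqnSn.
have [B [BA cB hB]] := IH hj'.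
set X := diffset A B.
set n := #|` A|.
case: (leqP (j.+1 * n) (3 * #|` X|)) => hX.
  by exists B; split => //; apply: leq_trans cB _.
case: (boolP (has (fun b => 3 * #|` [fset a in A | (a - b)%R \in X]| < 2 * n)%N A)).
  move=> /hasP [b bA hb].
  set Ab := [fset a in A | (a - b)%R \in X] in hb.
  set Z := [fset (a - b)%R | a in A `\` Ab].
  have cZ : #|` Z| = #|` A `\` Ab| by rewrite card_shift.
  have hID := cardfsID Ab A.
  have hIA : (#|` A `&` Ab| <= #|` Ab|)%N by apply: fsubset_leq_card; apply: fsubsetIr.
  have XZ : X `&` Z = fset0.
    apply/fsetP => y; rewrite in_fsetI in_fset0.
    apply/negbTE/negP => /andP [yX /imfsetP [a /= + ey]].
    rewrite in_fsetD => /andP [aAb aA].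
    move: aAb; rewrite in_fset /= inE aA /= -ey yX //.
  have hUI := cardfsUI X Z.
  rewrite XZ cardfs0 addn0 in hUI.
  have sub : X `|` Z `<=` diffset A (b |` B).
    apply/fsubsetP => y /fsetUP [/diffsetP [a [bb [aA bbB ->]]] | /imfsetP [a /= + ->]].
      by apply: mem_diffset => //; rewrite in_fset1U bbB orbT.
    rewrite in_fsetD => /andP [_ aA].
    by apply: mem_diffset => //; rewrite in_fset1U eqxx.
  have hsub := fsubset_leq_card sub.
  exists (b |` B); split.
  - by apply/fsubsetP => x; rewrite in_fset1U => /orP [/eqP -> // | /(fsubsetP BA)].
  - by rewrite cardfsU1 -add1n leq_add // leq_b1.
  - rewrite -/n -/X in hID hB. rewrite mulSn.
    have h3 : (#|` X| + #|` A `\` Ab| <= #|` diffset A (b |` B)|)%N.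
      by rewrite -cZ -hUI.
    move: h3 hB hb hIA hID. clear. move=> h3 hB hb hIA hID. lia.
move=> /hasPn hall.
have hk : (#|` diffset A A| * n <= 3 * (#|` X| * #|` X|))%N.
  apply: key => b bA; have := hall b bA; rewrite -leqNgt //.
have h1 : (j.+1 * j.+1 * n * n <= #|` diffset A A| * n)%N by rewrite leq_mul2r hj orbT.
have h2 : (3 * #|` X| * (3 * #|` X|) < j.+1 * n * (j.+1 * n))%N.
  by apply: ltn_mul.
exfalso. nia.
Qed.

End S.
Unset Implicit Arguments.

Theorem proposition2p3 :
  exists c : R, Rlt 0 c /\
  forall (G : zmodType) (A : {fset G}), A != fset0 ->
  let n := #|` A| in
  let kappa := Rdiv (INR #|` diffset A A|) (INR n) in
  forall s : nat, (1 <= s)%N ->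
  exists As : {fset G}, As `<=` A /\ (#|` As| <= s)%N /\
    Rle (Rmult (Rmult c (Rmin (sqrt kappa) (INR s))) (INR n))
        (INR #|` diffset A As|).
Proof.
exists (Rdiv 1 6); split; first by apply: Rdiv_lt_0_compat; lra.
move=> G A A0 n kappa s s1.
have [a0 a0A] := fset0Pn _ A0.
have n1 : (1 <= n)%N by rewrite /n cardfs_gt0.
set K := #|` diffset A A|.
have nK : (n <= K)%N.
  rewrite /n -(card_shift A a0); apply: fsubset_leq_card; apply/fsubsetP => y.
  by move=> /imfsetP [a /= aA ->]; apply: mem_diffset.
pose P j := (j * j * n <= K)%N.
have exP : exists j, P j by exists 1%N; rewrite /P !mul1n.
have ubP : forall j, P j -> (j <= K)%N.
  move=> j; rewrite /P => hj; apply: leq_trans hj.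
  case: j => // j; rewrite -mulnA leq_pmulr // muln_gt0 n1 //.
case: (ex_maxnP exP ubP) => j0 Pj0 maxj0.
have j01 : (1 <= j0)%N by apply: maxj0; rewrite /P !mul1n.
have Kj0 : (K < j0.+1 * j0.+1 * n)%N.
  by rewrite ltnNge; apply/negP => /maxj0; rewrite ltnn.
set m := minn s j0.
have Pm : (m * m * n <= K)%N.
  apply: leq_trans Pj0; rewrite leq_mul2r; apply/orP; right.
  by apply: leq_mul; rewrite geq_minr.
have [B [BA cB hB]] := @claim _ A m Pm.
exists B; split => //; split; first by apply: leq_trans cB (geq_minl _ _).
have hBR : Rle (Rmult (INR m) (INR n)) (Rmult (INR 3) (INR #|` diffset A B|)).
  by rewrite -!mult_INR; apply: le_INR; apply/leP.
change (INR 3) with (Rplus (Rplus 1 1) 1) in hBR.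
have Npos : Rlt 0 (INR n) by apply: lt_0_INR; apply/ltP.
have Ypos := pos_INR #|` diffset A B|.
have Mpos : Rle 0 (Rmin (sqrt kappa) (INR s)).
  apply: Rmin_glb; [exact: sqrt_pos | exact: pos_INR].
case: (leqP s j0) => hsj.
- have em : m = s by rewrite /m; apply/minn_idPl.
  rewrite em in hBR.
  have h := Rmult_le_compat_r (INR n) _ _ (Rlt_le _ _ Npos) (Rmin_r (sqrt kappa) (INR s)).
  nra.
- have em : m = j0 by rewrite /m; apply/minn_idPr; apply: ltnW.
  rewrite em in hBR.
  have hK : Rle (INR K) (Rmult (Rmult (INR j0 + 1) (INR j0 + 1)) (INR n)).
    rewrite -S_INR -!mult_INR; apply: le_INR; apply/leP; apply: ltnW; exact: Kj0.
  have hk : Rle kappa (Rmult (INR j0 + 1) (INR j0 + 1)).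
    apply: (Rmult_le_reg_r (INR n)) => //.
    rewrite /kappa /Rdiv Rmult_assoc Rinv_l; last by apply: Rgt_not_eq.
    by rewrite Rmult_1_r.
  have j0pos : Rle 1 (INR j0) by apply: (le_INR 1); apply/leP.
  have hs : Rle (sqrt kappa) (INR j0 + 1).
    rewrite -(sqrt_square (INR j0 + 1)); last by lra.
    exact: sqrt_le_1_alt.
  have hM : Rle (Rmin (sqrt kappa) (INR s)) (Rmult 2 (INR j0)).
    apply: Rle_trans (Rmin_l _ _) _; lra.
  have h := Rmult_le_compat_r (INR n) _ _ (Rlt_le _ _ Npos) hM.
  nra.
Qed.
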